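(* Let $\ell\ge1$ be an integer and $S_1,\dots,S_m$ site states. For $n$ sufficiently large, let $S=S_1\otimes\cdots\otimes S_m\otimes V^{\otimes n}$. If the carrier $u_\ell=(\ell,0,0)$ is passed successively through $S_1,\dots,S_m$ and then the $n$ vacuum sites, each step applying the map $R$, then the final carrier state is again $u_\ell$; i.e. $u_\ell\otimes S\simeq S'\otimes u_\ell$ under repeated application of $R$, for some $S'$.
   Context: A site state is a triple $(d,e,f)$ of nonnegative integers with $d=e-f+1$; $V=(1,0,0)$. Carrier states are triples $(a,b,c)$ of nonnegative integers. The map $R$ sends a carrier $(a,b,c)$ and a site $(d,e,f)$ to a site $(d',e',f')$ and a carrier $(a',b',c')$ with $d'=d+\min(a+b,a+c,b+f)-\min(e+c,d+c,d+b)$, $e'=e+\min(a+b,a+c,b+f)-\min(a+e,d+f,e+f)$, $f'=f+\min(e+c,d+c,d+b)-\min(a+e,d+f,e+f)$, $a'=a-\min(a+b,a+c,b+f)+\min(e+c,d+c,d+b)$, $b'=b-\min(a+b,a+c,b+f)+\min(a+e,d+f,e+f)$, $c'=c-\min(e+c,d+c,d+b)+\min(a+e,d+f,e+f)$. (This $R$ is the tropicalization of a three-wire whurl relation; it preserves $a-b+c$ and $d-e+f$.) The notation $X\otimes S_1\otimes\cdots\otimes S_k\simeq S_1'\otimes\cdots\otimes S_k'\otimes X'$ means that passing carrier $X$ through $S_1,\dots,S_k$ in order via $R$ produces sites $S_j'$ and final carrier $X'$. *)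

(* Defs.v *)
(* states are integer triples (nonnegativity imposed as hypotheses). *)
From Stdlib Require Import ZArith List Lia.
Import ListNotations.
Open Scope Z_scope.

Definition triple := (Z * Z * Z)%type.

Definition is_site (s : triple) : Prop :=
  let '(d, e, f) := s in 0 <= d /\ 0 <= e /\ 0 <= f /\ d = e - f + 1.

Definition is_carrier (x : triple) : Prop :=
  let '(a, b, c) := x in 0 <= a /\ 0 <= b /\ 0 <= c.

Definition V : triple := (1, 0, 0).

Definition u (l : Z) : triple := (l, 0, 0).

Definition R (x s : triple) : triple * triple :=
  let '(a, b, c) := x in
  let '(d, e, f) := s in
  let m1 := Z.min (Z.min (a + b) (a + c)) (b + f) in
  let m2 := Z.min (Z.min (e + c) (d + c)) (d + b) in
  let m3 := Z.min (Z.min (a + e) (d + f)) (e + f) in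
  ((d + m1 - m2, e + m1 - m3, f + m2 - m3),
   (a - m1 + m2, b - m1 + m3, c - m2 + m3)).

Fixpoint pass (x : triple) (ss : list triple) : list triple * triple :=
  match ss with
  | [] => ([], x)
  | s :: ss' =>
      let '(s', x') := R x s in
      let '(rest, xf) := pass x' ss' in
      (s' :: rest, xf)
  end.

(* Main.v *)
Require Import Defs.
From Stdlib Require Import ZArith List Lia.
Import ListNotations.
Open Scope Z_scope.

Lemma pass_cons x s ss : snd (pass x (s :: ss)) = snd (pass (snd (R x s)) ss).
Proof.
  simpl. destruct (R x s) as [s' x']. simpl. destruct (pass x' ss) as [r xf]. reflexivity.
Qed.

Lemma pass_app x A B : snd (pass x (A ++ B)) = snd (pass (snd (pass x A)) B).
Proof.
  revert x; induction A as [|s A IH]; intro x; simpl app.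
  - reflexivity.
  - rewrite !pass_cons. apply IH.
Qed.

Definition inv (l : Z) (x : triple) : Prop :=
  let '(a, b, c) := x in 0 <= a /\ 0 <= b /\ 0 <= c /\ a - b + c = l.

Lemma R_inv l x s : is_site s -> inv l x -> inv l (snd (R x s)).
Proof.
  destruct x as [[a b] c]; destruct s as [[d e] f]; simpl.
  intros; lia.
Qed.

Lemma pass_inv l Ss x : Forall is_site Ss -> inv l x -> inv l (snd (pass x Ss)).
Proof.
  intros H; revert x; induction H as [|s ss Hs Hss IH]; intros x Hx.
  - exact Hx.
  - rewrite pass_cons. apply IH. apply R_inv; assumption.
Qed.

Lemma vac0 (n : nat) : forall a c l, 0 <= a -> 0 <= c -> a + c = l ->
  (Z.to_nat c <= n)%nat -> snd (pass (a, 0, c) (repeat V n)) = u l.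
Proof.
  induction n as [|n IH]; intros a c l Ha Hc Hl Hn.
  - simpl. assert (c = 0) by lia. subst. unfold u. f_equal. f_equal. lia.
  - simpl repeat. rewrite pass_cons.
    unfold R, V.
    destruct (Z.eq_dec c 0) as [->|Hc0].
    + replace (Z.min (Z.min (a + 0) (a + 0)) (0 + 0)) with 0 by lia.
      replace (Z.min (Z.min (0 + 0) (1 + 0)) (1 + 0)) with 0 by lia.
      replace (Z.min (Z.min (a + 0) (1 + 0)) (0 + 0)) with 0 by lia.
      simpl snd. apply IH; try lia.
    + replace (Z.min (Z.min (a + 0) (a + c)) (0 + 0)) with 0 by lia.
      replace (Z.min (Z.min (0 + c) (1 + c)) (1 + 0)) with 1 by lia.
      replace (Z.min (Z.min (a + 0) (1 + 0)) (0 + 0)) with 0 by lia.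
      simpl snd. replace (0 - 0 + 0) with 0 by lia. apply IH; lia.
Qed.

Lemma vac (n : nat) l a b c : 1 <= l -> inv l (a, b, c) ->
  (S (Z.to_nat c) <= n)%nat -> snd (pass (a, b, c) (repeat V n)) = u l.
Proof.
  intros Hl Hi Hn. destruct n as [|n]; [lia|].
  simpl repeat. rewrite pass_cons. simpl in Hi.
  unfold R, V.
  set (m1 := Z.min (Z.min (a + b) (a + c)) (b + 0)).
  set (m2 := Z.min (Z.min (0 + c) (1 + c)) (1 + b)).
  set (m3 := Z.min (Z.min (a + 0) (1 + 0)) (0 + 0)).
  assert (m1 = b) by (unfold m1; lia).
  assert (m3 = 0) by (unfold m3; lia).
  assert (0 <= m2 <= c) by (unfold m2; lia).
  simpl snd. replace (b - m1 + m3) with 0 by lia.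
  apply vac0; lia.
Qed.

Theorem mainTheorem7 (l : Z) (Ss : list triple) :
  1 <= l ->
  Forall is_site Ss ->
  exists N : nat, forall n : nat, (N <= n)%nat ->
    exists S' : list triple, pass (u l) (Ss ++ repeat V n) = (S', u l).
Proof.
  intros Hl HS.
  assert (Hi : inv l (snd (pass (u l) Ss))).
  { apply pass_inv; [exact HS|]. simpl; lia. }
  destruct (snd (pass (u l) Ss)) as [[a b] c] eqn:E.
  exists (S (Z.to_nat c)). intros n Hn.
  exists (fst (pass (u l) (Ss ++ repeat V n))).
  rewrite (surjective_pairing (pass (u l) (Ss ++ repeat V n))). f_equal.
  rewrite pass_app, E. apply vac; assumption.
Qed.
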